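(* Let $N\ge 1$ be an integer and let $T\geq N^{3}$. Then in the $T$-period forecasting game with forecast grid $D=\{1/(2N),3/(2N),\dots,(2N-1)/(2N)\}$ there exists a mixed strategy of the forecaster such that $\mathbb{E}[K_T]\le 1/N$ against every mixed strategy of the rainmaker.
   Context: Forecasting game: fix a positive integer $N$, the grid $D=\{1/(2N),3/(2N),\dots,(2N-1)/(2N)\}\subset[0,1]$ (which has $N$ points), and a horizon $T$. In each period $t=1,\dots,T$ the rainmaker chooses the weather $a_t\in\{0,1\}$ (1 = rain) and the forecaster chooses a forecast $c_t\in D$; both players have perfect recall, i.e. each may condition its period-$t$ choice on the full history $h_{t-1}=(a_1,c_1,\dots,a_{t-1},c_{t-1})\in(\{0,1\}\times D)^{t-1}$. A pure strategy of a player is a map from histories to its choice set; a mixed strategy is a probability distribution over its (finitely many) pure strategies. For $d\in D$ let $n(d)=\sum_{t=1}^T \mathbf 1_{c_t=d}$ and, when $n(d)>0$, $\bar a(d)=\frac{1}{n(d)}\sum_{t=1}^T\mathbf 1_{c_t=d}\,a_t$. The calibration score is $K_T=\sum_{d\in D}\frac{n(d)}{T}\,|\bar a(d)-d|$ (terms with $n(d)=0$ are $0$); equivalently $K_T=\frac1T\sum_{d\in D}\big|\sum_{t=1}^T\mathbf 1_{c_t=d}(a_t-d)\big|$. Expectations are over the random choices of both players. *)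

(* Defs.v *)
From HB Require Import structures.
From mathcomp Require Import all_boot all_order all_algebra.
From mathcomp Require Import reals.
Set Implicit Arguments. Unset Strict Implicit. Unset Printing Implicit Defensive.
Import Order.TTheory GRing.Theory Num.Theory.
Local Open Scope ring_scope.

Definition grid (R : realType) (N : nat) (i : 'I_N) : R :=
  (2 * i + 1)%:R / (2 * N)%:R.

(* A history is the list of past (weather, forecast) pairs, oldest first;
   weather true = rain (a_t = 1). *)
Definition history (N : nat) := seq (bool * 'I_N).

Definition rain_strat (N : nat) := history N -> bool.
Definition fc_strat (N : nat) := history N -> 'I_N.

Fixpoint play (N : nat) (r : rain_strat N) (f : fc_strat N) (n : nat)
  : history N :=
  match n with
  | 0 => [::]
  | n'.+1 => let h := play r f n' in rcons h (r h, f h)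
  end.

Definition calib (R : realType) (N T : nat) (h : history N) : R :=
  T%:R^-1 * \sum_(i < N)
     `| \sum_(p <- h) (if p.2 == i then (p.1%:R - grid R i) else 0) |.

(* A mixed strategy: a probability distribution over finitely many pure
   strategies, given as a finite list of (probability, pure strategy). *)
Definition is_mixed (R : realType) (S : Type) (m : seq (R * S)) : Prop :=
  all (fun p => 0 <= p.1) m /\ \sum_(p <- m) p.1 = 1.

Definition expected_calib (R : realType) (N T : nat)
  (mf : seq (R * fc_strat N)) (mr : seq (R * rain_strat N)) : R :=
  \sum_(p <- mf) \sum_(q <- mr) p.1 * q.1 * calib R T (play q.2 p.2 T).

(* Main.v *)
Require Import Defs.
From HB Require Import structures.
From mathcomp Require Import all_boot all_order all_algebra.
From mathcomp Require Import reals.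
From mathcomp Require Import ring lra.
From Stdlib Require Import IndefiniteDescription.
Import Order.TTheory GRing.Theory Num.Theory.
Local Open Scope ring_scope.

Section Core.
Variable R : realType.
Definition pos (x : R) := Num.max x 0.

Lemma Fineq (x y m : R) : 0 <= m ->
  pos (`|y| - m) ^+ 2 <= pos (`|x| - m) ^+ 2
     + 2 * (pos (x - m) - pos (- x - m)) * (y - x) + (y - x) ^+ 2.
Proof.
move=> hm; have := sqr_ge0 (y - x); rewrite /pos !maxEle !expr2.
have [hx|hx] := lerP 0 x; rewrite ?(ger0_norm hx) ?(ltr0_norm hx);
have [hy|hy] := lerP 0 y; rewrite ?(ger0_norm hy) ?(ltr0_norm hy);
case: (leP (x - m) 0) => ?; case: (leP (- x - m) 0) => ?;
case: (leP (y - m) 0) => ?; case: (leP (- y - m) 0) => ?; nra.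
Qed.

Lemma pos_ge0 (x : R) : 0 <= pos x.
Proof. by rewrite /pos le_max lexx orbT. Qed.

Lemma pos_le (x y : R) : x <= y -> pos x <= pos y.
Proof. by move=> hxy; rewrite /pos !maxEle; case: (leP x 0) => ?; case: (leP y 0) => ?; lra. Qed.

Lemma step1 (S m0 d p e : R) : 0 <= m0 -> 0 <= e -> 0 <= p <= 1 ->
  `|p - d| <= e ->
  p * pos (`|S + 1 - d| - (m0 + e)) ^+ 2
   + (1 - p) * pos (`|S - d| - (m0 + e)) ^+ 2
  <= pos (`|S| - m0) ^+ 2 + p * (1 - p).
Proof.
move=> hm he /andP[hp0 hp1] hpd.
set yb := S + p - d.
have h1 := Fineq yb (S + 1 - d) (m0 + e) (addr_ge0 hm he).
have h0 := Fineq yb (S - d) (m0 + e) (addr_ge0 hm he).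
set F := pos (`|yb| - (m0 + e)) ^+ 2 in h1 h0.
set D := pos (yb - (m0 + e)) - pos (- yb - (m0 + e)) in h1 h0.
have hF : F <= pos (`|S| - m0) ^+ 2.
  rewrite /F !expr2.
  suff hh : pos (`|yb| - (m0 + e)) <= pos (`|S| - m0).
    by apply: ler_pM; rewrite ?pos_ge0.
  apply: pos_le.
  have : `|yb| <= `|S| + `|p - d|.
    by rewrite /yb -addrA ler_normD.
  lra.
have e1 : S + 1 - d - yb = 1 - p by rewrite /yb; ring.
have e0 : S - d - yb = - p by rewrite /yb; ring.
rewrite e1 in h1; rewrite e0 in h0.
have := ler_wpM2l hp0 h1.
have hp1' : 0 <= 1 - p by lra.
have := ler_wpM2l hp1' h0.
rewrite !expr2; nra.
Qed.

Lemma mix2 (u1 w1 u2 w2 p : R) : 0 <= p <= 1 ->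
  p * u1 + (1 - p) * w1 <= 0 -> p * u2 + (1 - p) * w2 <= 0 ->
  w1 < u1 -> u2 < w2 ->
  exists lam, 0 <= lam <= 1 /\ lam * u1 + (1 - lam) * u2 <= 0
                          /\ lam * w1 + (1 - lam) * w2 <= 0.
Proof.
move=> /andP[hp0 hp1] h1 h2 hs1 hs2.
set D := (u1 - w1) + (w2 - u2).
have hD : 0 < D by rewrite /D; lra.
have hnum : (u1 - w1) * w2 - (u2 - w2) * w1 <= 0 by nra.
exists ((w2 - u2) / D); split.
  apply/andP; split; first by apply: divr_ge0; lra.
  by rewrite ler_pdivrMr // mul1r /D; lra.
have E1 : (w2 - u2) / D * u1 + (1 - (w2 - u2) / D) * u2
   = ((u1 - w1) * w2 - (u2 - w2) * w1) / D.
  by rewrite /D; field; rewrite -/D; apply/lt0r_neq0.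
have E2 : (w2 - u2) / D * w1 + (1 - (w2 - u2) / D) * w2
   = ((u1 - w1) * w2 - (u2 - w2) * w1) / D.
  by rewrite /D; field; rewrite -/D; apply/lt0r_neq0.
rewrite E1 E2; split; by rewrite ler_pdivrMr // mul0r.
Qed.

Definition good (K : nat) (u w : nat -> R) :=
  exists i j lam, (i < K.+1)%N /\ (j < K.+1)%N /\ 0 <= lam <= 1 /\
    lam * u i + (1 - lam) * u j <= 0 /\ lam * w i + (1 - lam) * w j <= 0.

Lemma minimax (K : nat) (u w : nat -> R) :
  (forall i, (i < K.+1)%N ->
     (i%:R / K.+1%:R) * u i + (1 - i%:R / K.+1%:R) * w i <= 0 /\
     (i.+1%:R / K.+1%:R) * u i + (1 - i.+1%:R / K.+1%:R) * w i <= 0) ->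
  good K u w.
Proof.
move=> H.
have hK : (0 : R) < K.+1%:R by rewrite ltr0Sn.
have single i : (i < K.+1)%N -> u i <= 0 -> w i <= 0 -> good K u w.
  move=> hi hu hw; exists i, i, 1; do 2 split => //; split.
    by rewrite ler01 lexx.
  by split; lra.
have claim : forall j, (j <= K)%N -> good K u w \/ (w j <= 0 /\ 0 < u j).
  elim=> [_|j IH hj].
    move: (H 0%N (ltn0Sn K)) => [h _].
    rewrite mulr0n mul0r subr0 mul1r in h.
    case: (leP (u 0%N) 0) => hu; first by left; apply: (single 0%N) => //; lra.
    by right; split => //; lra.
  have [//|[hw hu]] := IH (ltnW hj); first by left.
  have hjK : (j < K.+1)%N by apply: leq_trans hj _.
  have [_ hA] := H j hjK.
  have [hB _] := H j.+1 ltac:(by rewrite ltnS).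
  set p0 := (j.+1%:R / K.+1%:R) in hA hB.
  have hp0 : 0 <= p0 by rewrite /p0 divr_ge0 // ler0n.
  have hp1 : p0 < 1 by rewrite /p0 ltr_pdivrMr // mul1r ltr_nat.
  case: (leP (u j.+1) 0) => hu1.
    case: (leP (w j.+1) 0) => hw1.
      by left; apply: (single j.+1) => //; rewrite ltnS.
    have [lam [hl [h1 h2]]] :=
      mix2 (u j) (w j) (u j.+1) (w j.+1) p0 ltac:(apply/andP; split; lra) hA hB ltac:(lra) ltac:(lra).
    left; exists j, j.+1, lam; do 2 split => //; by rewrite ltnS.
  right; split => //; nra.
have [//|[_ hu]] := claim K (leqnn K).
have [_ h] := H K (ltnSn K).
rewrite divff ?lt0r_neq0 // subrr mul0r addr0 mul1r in h.
lra.
Qed.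
End Core.
Arguments pos {R}.
Arguments step1 {R}.
Arguments minimax {R}.
Arguments good {R}.
Arguments pos_ge0 {R}.
Arguments pos_le {R}.

Section Model.
Variables (R : realType) (n : nat).
Local Notation N := n.+1.
Local Notation hist := (history N).

Definition Sc (h : hist) (i : 'I_N) : R :=
  \sum_(p <- h) (if p.2 == i then p.1%:R - grid R i else 0).
Definition Nc (h : hist) (i : 'I_N) : R :=
  \sum_(p <- h) (if p.2 == i then 1 else 0).
Definition e0 : R := (2 * N)%:R^-1.
Definition hc h i := pos (`|Sc h i| - Nc h i * e0).
Definition Pot h := \sum_(i < N) hc h i ^+ 2.

Lemma Sc_rcons h a c i :
  Sc (rcons h (a, c)) i = Sc h i + (if c == i then a%:R - grid R i else 0).
Proof. by rewrite /Sc big_rcons. Qed.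

Lemma Nc_rcons h a c i :
  Nc (rcons h (a, c)) i = Nc h i + (if c == i then 1 else 0).
Proof. by rewrite /Nc big_rcons. Qed.

Lemma Pot_rcons h a c :
  Pot (rcons h (a, c)) = Pot h - hc h c ^+ 2
    + pos (`|Sc h c + a%:R - grid R c| - (Nc h c * e0 + e0)) ^+ 2.
Proof.
rewrite /Pot (bigD1 c) //= [in RHS](bigD1 c) //=.
have -> : \sum_(i < N | i != c) hc (rcons h (a, c)) i ^+ 2
        = \sum_(i < N | i != c) hc h i ^+ 2.
  apply: eq_bigr => i /negPf hi.
  by rewrite /hc Sc_rcons Nc_rcons eq_sym hi !addr0.
rewrite /hc Sc_rcons Nc_rcons eqxx mulrDl mul1r addrA.
ring.
Qed.

Lemma gridE (i : 'I_N) : grid R i = (2 * i + 1)%:R * e0.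
Proof. by rewrite /grid /e0. Qed.

Lemma cell_cond h (c : 'I_N) (p : R) : 0 <= p <= 1 -> `|p - grid R c| <= e0 ->
  p * (Pot (rcons h (true, c)) - Pot h - 4^-1)
  + (1 - p) * (Pot (rcons h (false, c)) - Pot h - 4^-1) <= 0.
Proof.
move=> hp hpd.
rewrite !Pot_rcons.
have he : 0 <= e0 by rewrite /e0 invr_ge0 ler0n.
have hm : 0 <= Nc h c * e0.
  apply: mulr_ge0 => //; rewrite /Nc; apply: sumr_ge0 => x _.
  by case: ifP => _; rewrite ?ler01 ?lexx.
have := step1 (Sc h c) (Nc h c * e0) (grid R c) p e0 hm he hp hpd.
rewrite /= mulr1n mulr0n addr0.
set A := pos _ ^+ 2; set B := pos _ ^+ 2; set C := pos _ ^+ 2.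
have : p * (1 - p) <= 4^-1.
  have : 0 <= (p - 2^-1) ^+ 2 by apply: sqr_ge0.
  have h2 : (2 : R)^-1 * 2^-1 = 4^-1 by rewrite -invfM; congr (_^-1); ring.
  rewrite expr2; nra.
rewrite /hc -/C.
move: hp => /andP [hp0 hp1].
nra.
Qed.

Lemma e0_ge0 : 0 <= e0.
Proof. by rewrite /e0 invr_ge0 ler0n. Qed.

Lemma exists_sel h : exists t : 'I_N * 'I_N * R, 0 <= t.2 <= 1 /\
  forall a, t.2 * Pot (rcons h (a, t.1.1)) + (1 - t.2) * Pot (rcons h (a, t.1.2))
            <= Pot h + 4^-1.
Proof.
pose U := fun k : nat => Pot (rcons h (true, inord k)) - Pot h - 4^-1.
pose W := fun k : nat => Pot (rcons h (false, inord k)) - Pot h - 4^-1.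
have hN : (0 : R) < N%:R by rewrite ltr0Sn.
have [i [j [lam [hi [hj [hl [h1 h2]]]]]]] : good n U W.
  apply: minimax => i hi.
  have hg : grid R (inord i : 'I_N) = (2 * i + 1)%:R / (2 * N)%:R.
    by rewrite /grid inordK.
  have E1 : i%:R / N%:R - grid R (inord i : 'I_N) = - e0.
    rewrite hg /e0 natrD !natrM; field.
    by rewrite paddr_eq0 ?ler01 ?ler0n // oner_eq0.
  have E2 : i.+1%:R / N%:R - grid R (inord i : 'I_N) = e0.
    rewrite hg /e0 -addn1 !natrD !natrM; field.
    by rewrite paddr_eq0 ?ler01 ?ler0n // oner_eq0.
  split; apply: cell_cond.
  - apply/andP; split; first by rewrite divr_ge0 ?ler0n.
    by rewrite ler_pdivrMr // mul1r ler_nat ltnW.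
  - by rewrite E1 normrN ger0_norm ?e0_ge0.
  - apply/andP; split; first by rewrite divr_ge0 ?ler0n.
    by rewrite ler_pdivrMr // mul1r ler_nat.
  - by rewrite E2 ger0_norm ?e0_ge0.
exists (inord i, inord j, lam); split => // -[] /=.
  by move: h1; rewrite /U; lra.
by move: h2; rewrite /W; lra.
Qed.

End Model.
Arguments Pot {R n}.
Arguments Sc {R n}.
Arguments Nc {R n}.
Arguments hc {R n}.
Arguments exists_sel {R n}.

Lemma dsum (R : realType) (A B : Type) (s : seq A) (t : seq B) (f : A -> R) (g : B -> R) :
  \sum_(x <- s) \sum_(y <- t) f x * g y = (\sum_(x <- s) f x) * (\sum_(y <- t) g y).
Proof. by rewrite mulr_suml; apply: eq_bigr => x _; rewrite mulr_sumr. Qed.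

Arguments dsum {R A B}.

Lemma all_allpairs_w (A B C : Type) (P : pred A) (Q : pred B) (Z : pred C)
  (f : A -> B -> C) s t : all P s -> all Q t ->
  (forall x y, P x -> Q y -> Z (f x y)) -> all Z [seq f x y | x <- s, y <- t].
Proof.
elim: s => [//|x s IH] /andP[px ps] qt H.
rewrite allpairs_cons all_cat IH // andbT all_map.
by apply: (sub_all _ qt) => y qy /=; apply: H.
Qed.

Lemma sum_le_all (R : realType) (A : Type) (P : pred A) (F G : A -> R) s :
  all P s -> (forall x, P x -> F x <= G x) ->
  \sum_(x <- s) F x <= \sum_(x <- s) G x.
Proof.
elim: s => [|x s IH] /=; first by rewrite !big_nil.
move=> /andP[px ps] H; rewrite !big_cons; apply: lerD; [exact: H | exact: IH].
Qed.

Arguments sum_le_all {R A}.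

Section Game.
Variables (R : realType) (n : nat).
Local Notation N := n.+1.
Local Notation hist := (history N).
Local Notation fs := (fc_strat N).

Definition glue (h0 : hist) (c : 'I_N) (f0 f1 : fs) : fs := fun h =>
  if (size h <= size h0)%N then c
  else if (nth (false, c) h (size h0)).1 then f1 h else f0 h.

Fixpoint playfrom (h : hist) (r : rain_strat N) (f : fs) k : hist :=
  match k with
  | 0 => h
  | k'.+1 => let h' := playfrom h r f k' in rcons h' (r h', f h')
  end.

Lemma play_from r f k : play r f k = playfrom [::] r f k.
Proof. by elim: k => //= k ->. Qed.

Lemma playfrom_ext h r f k : exists s, playfrom h r f k = h ++ s.
Proof.
elim: k => [|k [s IH]] /=; first by exists [::]; rewrite cats0.
by exists (rcons s (r (h ++ s), f (h ++ s))); rewrite IH rcons_cat.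
Qed.

Lemma playfromS h r f k : playfrom h r f k.+1 = playfrom (rcons h (r h, f h)) r f k.
Proof.
elim: k => [//|k IH].
transitivity (let h' := playfrom h r f k.+1 in rcons h' (r h', f h')); first by [].
by rewrite IH.
Qed.

Lemma playfrom_eq h r f g k : (forall s, f (h ++ s) = g (h ++ s)) ->
  playfrom h r f k = playfrom h r g k.
Proof.
move=> E; elim: k => //= k IH; rewrite IH.
by have [s Hs] := playfrom_ext h r g k; rewrite Hs E.
Qed.

Lemma size_playfrom h r f k : size (playfrom h r f k) = (size h + k)%N.
Proof. by elim: k => [|k IH] /=; rewrite ?addn0 // size_rcons IH addnS. Qed.

Lemma glue_h0 h0 c f0 f1 : glue h0 c f0 f1 h0 = c.
Proof. by rewrite /glue leqnn. Qed.

Lemma glue_ext h0 c f0 f1 a s :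
  glue h0 c f0 f1 (rcons h0 (a, c) ++ s) = (if a then f1 else f0) (rcons h0 (a, c) ++ s).
Proof.
rewrite /glue.
have -> : (size (rcons h0 (a, c) ++ s) <= size h0)%N = false.
  by rewrite size_cat size_rcons addSn ltnNge leq_addr.
by rewrite cat_rcons nth_cat ltnn subnn /=; case: a.
Qed.

Lemma playfrom_glue h0 c f0 f1 a r k :
  playfrom (rcons h0 (a, c)) r (glue h0 c f0 f1) k
  = playfrom (rcons h0 (a, c)) r (if a then f1 else f0) k.
Proof. by apply: playfrom_eq => s; rewrite glue_ext. Qed.

Arguments playfrom : simpl never.

Variable sel : hist -> 'I_N * 'I_N * R.

Fixpoint L (k : nat) (h0 : hist) : seq (R * fs) :=
  match k with
  | 0 => [:: (1, fun _ => ord0)]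
  | k'.+1 =>
    [seq ((sel h0).2 * x.1 * y.1, glue h0 (sel h0).1.1 x.2 y.2)
       | x <- L k' (rcons h0 (false, (sel h0).1.1)),
         y <- L k' (rcons h0 (true, (sel h0).1.1))]
    ++ [seq ((1 - (sel h0).2) * x.1 * y.1, glue h0 (sel h0).1.2 x.2 y.2)
       | x <- L k' (rcons h0 (false, (sel h0).1.2)),
         y <- L k' (rcons h0 (true, (sel h0).1.2))]
  end.

Hypothesis Hsel : forall h, 0 <= (sel h).2 <= 1 /\
  forall a, (sel h).2 * Pot (rcons h (a, (sel h).1.1))
            + (1 - (sel h).2) * Pot (rcons h (a, (sel h).1.2)) <= Pot h + 4^-1.

Lemma weights k h0 :
  all (fun x => 0 <= x.1) (L k h0) /\ \sum_(x <- L k h0) x.1 = 1.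
Proof.
elim: k h0 => [|k IH] h0 /=.
  by rewrite big_seq1 ler01.
have [/andP[l0 l1] _] := Hsel h0.
have l1' : 0 <= 1 - (sel h0).2 by lra.
split.
  rewrite all_cat; apply/andP; split;
  (apply: all_allpairs_w; [exact: (IH _).1 | exact: (IH _).1 |]);
  by move=> x y /= hx hy; rewrite !mulr_ge0.
rewrite big_cat !big_allpairs_dep /=.
rewrite (dsum _ _ (fun x => (sel h0).2 * x.1) (fun y => y.1)).
rewrite (dsum _ _ (fun x => (1 - (sel h0).2) * x.1) (fun y => y.1)).
by rewrite -!mulr_sumr !(IH _).2 !mulr1; ring.
Qed.

Lemma branch r k h0 c (lam : R) (s t : seq (R * fs)) :
  \sum_(z <- [seq (lam * x.1 * y.1, glue h0 c x.2 y.2) | x <- s, y <- t])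
     z.1 * Pot (playfrom h0 r z.2 k.+1)
  = lam * (\sum_(x <- if r h0 then t else s)
              x.1 * Pot (playfrom (rcons h0 (r h0, c)) r x.2 k))
        * (\sum_(y <- if r h0 then s else t) y.1).
Proof.
rewrite big_allpairs_dep /=.
under eq_bigr => x _ do under eq_bigr => y _ do
  rewrite playfromS glue_h0 playfrom_glue.
case: (r h0) => /=.
  rewrite exchange_big /=.
  transitivity (\sum_(y <- t) \sum_(x <- s)
     (lam * (y.1 * Pot (playfrom (rcons h0 (true, c)) r y.2 k))) * x.1).
    by apply: eq_bigr => y _; apply: eq_bigr => x _; ring.
  by rewrite dsum -mulr_sumr.
transitivity (\sum_(x <- s) \sum_(y <- t)
   (lam * (x.1 * Pot (playfrom (rcons h0 (false, c)) r x.2 k))) * y.1).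
  by apply: eq_bigr => x _; apply: eq_bigr => y _; ring.
by rewrite dsum -mulr_sumr.
Qed.

Lemma expect r k h0 :
  \sum_(x <- L k h0) x.1 * Pot (playfrom h0 r x.2 k) <= Pot h0 + k%:R * 4^-1.
Proof.
elim: k h0 => [|k IH] h0.
  by rewrite /= big_seq1 /= mul1r mul0r addr0; exact: lexx.
have [/andP[l0 l1] Hs] := Hsel h0.
rewrite /= big_cat !branch.
have key a c : \sum_(x <- if a then L k (rcons h0 (true, c)) else L k (rcons h0 (false, c)))
     x.1 * Pot (playfrom (rcons h0 (a, c)) r x.2 k) <= Pot (rcons h0 (a, c)) + k%:R * 4^-1.
  by case: a; apply: IH.
have one a c : \sum_(y <- if a then L k (rcons h0 (false, c)) else L k (rcons h0 (true, c)))
     y.1 = 1.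
  by case: a; apply: (weights _ _).2.
rewrite !one !mulr1.
have l1' : 0 <= 1 - (sel h0).2 by lra.
have k1 := ler_wpM2l l0 (key (r h0) (sel h0).1.1).
have k2 := ler_wpM2l l1' (key (r h0) (sel h0).1.2).
have := Hs (r h0).
rewrite -[k.+1]addn1 natrD.
move=> hs; apply: le_trans (lerD k1 k2) _; lra.
Qed.

End Game.

Arguments L {R n}.
Arguments playfrom {n}.

Section Final.
Variables (R : realType) (n : nat).
Local Notation N := n.+1.
Local Notation hist := (history N).

Lemma sumNc (h : hist) : \sum_(i < N) Nc (R:=R) h i = (size h)%:R.
Proof.
rewrite /Nc exchange_big /=.
transitivity (\sum_(p <- h) (1 : R)).
  apply: eq_bigr => p _; rewrite (bigD1 p.2) //= eqxx big1 ?addr0 //.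
  by move=> i /negPf; rewrite eq_sym => ->.
by elim: h => [|x h IH]; rewrite ?big_nil ?big_cons ?IH //= mulrS.
Qed.

Lemma sumabs (h : hist) (lam : R) : 0 < lam ->
  \sum_(i < N) `|Sc h i| <= (size h)%:R * e0 R n + Pot h / (2 * lam) + N%:R * lam / 2.
Proof.
move=> hl.
have each i : `|Sc h i| <= Nc h i * e0 R n + (hc h i ^+ 2 / (2 * lam) + lam / 2).
  have h1 : `|Sc h i| - Nc h i * e0 R n <= hc h i by rewrite /hc /pos le_max lexx.
  have h2 : hc h i <= hc h i ^+ 2 / (2 * lam) + lam / 2.
    have : 0 <= (hc h i - lam) ^+ 2 / (2 * lam).
      by apply: divr_ge0; [apply: sqr_ge0 | lra].
    have -> : (hc h i - lam) ^+ 2 / (2 * lam) = hc h i ^+ 2 / (2 * lam) + lam / 2 - hc h i.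
      by field; apply/lt0r_neq0.
    lra.
  lra.
apply: le_trans (ler_sum _ (fun i _ => each i)) _.
rewrite big_split /= -mulr_suml sumNc big_split /= -mulr_suml sumr_const card_ord.
rewrite /Pot -mulr_natr.
lra.
Qed.

Lemma Pot_nil : Pot (R:=R) ([::] : hist) = 0.
Proof.
rewrite /Pot big1 // => i _.
by rewrite /hc /Sc /Nc !big_nil normr0 mul0r subrr /pos maxxx expr0n.
Qed.

End Final.

Lemma arith (R : realType) (t m : R) : 0 < t -> 0 < m -> m ^+ 3 <= t ->
  t^-1 * (t * (2%:R * m)^-1 + m * (t / (2 * m ^+ 2)) / 2)
  + t^-1 / (2 * (t / (2 * m ^+ 2))) * (t / 4) <= m^-1.
Proof.
move=> ht hm hm3.
have E : t^-1 * (t * (2%:R * m)^-1 + m * (t / (2 * m ^+ 2)) / 2)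
  + t^-1 / (2 * (t / (2 * m ^+ 2))) * (t / 4)
  = (2 * m)^-1 + (4 * m)^-1 + (4 * m)^-1 * (m ^+ 3 / t).
  by field; rewrite !lt0r_neq0.
rewrite E.
have h3 : m ^+ 3 / t <= 1 by rewrite ler_pdivrMr // mul1r.
have h4 : 0 <= (4 * m)^-1 by rewrite invr_ge0 ltW // mulr_gt0.
have E2 : (2 * m)^-1 + (4 * m)^-1 + (4 * m)^-1 = m^-1.
  by field; rewrite lt0r_neq0.
nra.
Qed.

Arguments weights {R n sel}.
Arguments sumabs {R n}.
Arguments Pot_nil {R n}.
Arguments expect {R n sel}.

Theorem theorem2 (R : realType) (N T : nat) :
  (1 <= N)%N -> (N ^ 3 <= T)%N ->
  exists mf : seq (R * fc_strat N),
    is_mixed mf /\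
    forall mr : seq (R * rain_strat N),
      is_mixed mr -> expected_calib T mf mr <= N%:R^-1.
Proof.
case: N => [//|n] _ hT.
pose sel := fun h => proj1_sig (constructive_indefinite_description _ (exists_sel (R:=R) (n:=n) h)).
have Hsel : forall h, 0 <= (sel h).2 <= 1 /\
  forall a, (sel h).2 * Pot (rcons h (a, (sel h).1.1))
            + (1 - (sel h).2) * Pot (rcons h (a, (sel h).1.2)) <= Pot h + 4^-1.
  by move=> h; exact: (proj2_sig (constructive_indefinite_description _ (exists_sel (R:=R) (n:=n) h))).
have [w0 w1] := weights Hsel T [::].
exists (L sel T [::]); split; first by split.
have hT0 : (0 < T)%N by apply: leq_trans hT; rewrite expn_gt0.
set t : R := T%:R.
set m : R := n.+1%:R.
have ht : 0 < t by rewrite /t ltr0n.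
have hm : 0 < m by rewrite /m ltr0n.
have hm3 : m ^+ 3 <= t by rewrite /m /t -natrX ler_nat.
pose lam : R := t / (2 * m ^+ 2).
have hl : 0 < lam by rewrite /lam divr_gt0 // mulr_gt0 // exprn_gt0.
pose al : R := t^-1 * (t * e0 R n + m * lam / 2).
pose be : R := t^-1 / (2 * lam).
have hbe : 0 <= be by rewrite /be divr_ge0 // ?invr_ge0 ?ltW // mulr_gt0.
have inner : forall r, \sum_(p <- L sel T [::]) p.1 * calib R T (play r p.2 T) <= m^-1.
  move=> r.
  have hb : forall f, calib R T (play r f T)
      <= al + be * Pot (playfrom [::] r f T).
    move=> f.
    have -> : calib R T (play r f T) = t^-1 * \sum_(i < n.+1) `|Sc (play r f T) i| by [].
    rewrite play_from.
    have := sumabs (playfrom [::] r f T) lam hl.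
    rewrite size_playfrom add0n -/t => hs.
    have hti : 0 <= t^-1 by rewrite invr_ge0 ltW.
    apply: le_trans (ler_wpM2l hti hs) _.
    rewrite /al /be -/m le_eqVlt; apply/orP; left; apply/eqP; field.
    by rewrite (lt0r_neq0 hl) /= lt0r_neq0 // ltr0n.
  apply: le_trans (sum_le_all _ _ (fun p => p.1 * (al + be * Pot (playfrom [::] r p.2 T))) _ w0 _) _.
    by move=> p hp /=; apply: ler_wpM2l => //; apply: hb.
  rewrite (eq_bigr (fun p => al * p.1 + be * (p.1 * Pot (playfrom [::] r p.2 T)))); last first.
    by move=> p _; ring.
  rewrite big_split /= -!mulr_sumr w1 mulr1.
  have ex := expect Hsel r T [::].
  rewrite Pot_nil add0r in ex.
  apply: le_trans (lerD (lexx al) (ler_wpM2l hbe ex)) _.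
  rewrite -/t /al /be /lam /e0 natrM -/m.
  exact: arith.
move=> mr [mr0 mr1].
rewrite /expected_calib exchange_big /=.
apply: le_trans (sum_le_all _ _ (fun q => q.1 * m^-1) _ mr0 _) _.
  move=> q hq /=.
  rewrite (eq_bigr (fun p => q.1 * (p.1 * calib R T (play q.2 p.2 T)))); last first.
    by move=> p _; ring.
  rewrite -mulr_sumr; apply: ler_wpM2l => //; exact: inner.
by rewrite -mulr_suml mr1 mul1r.
Qed.
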